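(* Let $D$ be a division algebra and let $\sigma$ be an automorphism of $D$ such that the field $F=\mathcal{Z}(D)\cap D_\sigma$ is infinite. Then for every $n\ge 0$, the constant tuple $(\sigma,\ldots,\sigma)$ of length $n$ is automorphically normalizable over $D$; that is, every quotient ring of $D[t_1,\ldots,t_n;\sigma,\ldots,\sigma]$ by a proper two-sided ideal is automorphically normalizable over $D$.
   Context: All rings are associative with unity. $\mathcal{Z}(D)$ is the center of $D$ and $D_\sigma=\{r\in D:\sigma(r)=r\}$. For commuting automorphisms $\sigma_1,\ldots,\sigma_n$ of $D$, the skew polynomial ring $D[t_1,\ldots,t_n;\sigma_1,\ldots,\sigma_n]$ consists of polynomials $\sum r_{\mathbf i}t_1^{i_1}\cdots t_n^{i_n}$ ($r_{\mathbf i}\in D$) in pairwise commuting variables, with multiplication determined by $t_ia=\sigma_i(a)t_i$ for $a\in D$. For a ring $S\supseteq D$, an element $a\in S$ is automorphic over $D$ with respect to $\tau\in\mathrm{Aut}(D)$ if $ab=\tau(b)a$ for all $b\in D$. $S$ is finite over a subring $R$ if it is finitely generated as a left $R$-module. Commuting elements $a_1,\ldots,a_m\in S$ are (left) algebraically independent over $D$ if the monomials $a_1^{i_1}\cdots a_m^{i_m}$ are left linearly independent over $D$. $S$ is automorphically normalizable over $D$ if there exist $m\ge0$ and commuting elements $a_1,\ldots,a_m\in S$, automorphic over $D$ with respect to pairwise commuting automorphisms $\tau_1,\ldots,\tau_m$ of $D$, left algebraically independent over $D$, such that $S$ is finite over the subring $D[a_1,\ldots,a_m]$ generated by $D\cup\{a_1,\ldots,a_m\}$.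 A tuple $(\sigma_1,\ldots,\sigma_n)$ of commuting automorphisms is automorphically normalizable over $D$ if every quotient of $D[t_1,\ldots,t_n;\sigma_1,\ldots,\sigma_n]$ by a proper two-sided ideal is automorphically normalizable over $D$. *)

(* Defs.v *)
From HB Require Import structures.
From mathcomp Require Import all_boot all_order all_algebra.
Set Implicit Arguments. Unset Strict Implicit. Unset Printing Implicit Defensive.
Import GRing.Theory.
Local Open Scope ring_scope.

Definition division_ring (D : unitRingType) : Prop :=
  forall x : D, x != 0 -> x \is a GRing.unit.

Definition ring_aut (D : nzRingType) (f : {rmorphism D -> D}) : Prop := bijective f.

(* F = Z(D) ∩ D_sigma is infinite (no finite list exhausts it). *)
Definition center_fixed_infinite (D : nzRingType) (sigma : D -> D) : Prop :=
  forall s : seq D, exists2 c : D,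
    (forall r : D, c * r = r * c) /\ sigma c = c & c \notin s.

Definition monom (S : nzRingType) (m : nat) (a : 'I_m -> S) (e : 'I_m -> nat) : S :=
  \prod_(i < m) a i ^+ e i.

Definition commuting_family (S : nzRingType) (m : nat) (a : 'I_m -> S) : Prop :=
  forall i j, a i * a j = a j * a i.

Definition automorphic (D S : nzRingType) (phi : D -> S) (tau : D -> D) (a : S) : Prop :=
  forall b : D, a * phi b = phi (tau b) * a.

Definition alg_indep (D S : nzRingType) (phi : D -> S) (m : nat) (a : 'I_m -> S) : Prop :=
  forall (N : nat) (r : {ffun 'I_m -> 'I_N} -> D),
    \sum_(e : {ffun 'I_m -> 'I_N}) phi (r e) * monom a (fun i => nat_of_ord (e i)) = 0 ->
    forall e, r e = 0.

Definition in_gen_subring (D S : nzRingType) (phi : D -> S) (m : nat) (a : 'I_m -> S)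
  (s : S) : Prop :=
  forall P : S -> Prop,
    P 1 -> (forall x y, P x -> P y -> P (x - y)) -> (forall x y, P x -> P y -> P (x * y)) ->
    (forall d, P (phi d)) -> (forall i, P (a i)) -> P s.

Definition finite_over (S : nzRingType) (R : S -> Prop) : Prop :=
  exists g : seq S, forall s : S, exists c : 'I_(size g) -> S,
    (forall j, R (c j)) /\ s = \sum_(j < size g) c j * g`_j.

Definition aut_normalizable (D S : nzRingType) (phi : {rmorphism D -> S}) : Prop :=
  exists (m : nat) (a : 'I_m -> S) (tau : 'I_m -> {rmorphism D -> D}),
    (forall i, ring_aut (tau i)) /\
    (forall i j, tau i \o tau j =1 tau j \o tau i) /\
    commuting_family a /\
    (forall i, automorphic phi (tau i) (a i)) /\
    alg_indep phi a /\
    finite_over (in_gen_subring phi a).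

(* S (with the embedding phi : D -> S and elements x_1..x_n) is a quotient of
   D[t_1,...,t_n; sigma_1,...,sigma_n] by a two-sided ideal via t_i |-> x_i:
   the x_i commute, x_i d = sigma_i(d) x_i, and S is spanned as a left
   D-module by the monomials in the x_i (i.e. the induced map from the skew
   polynomial ring is onto).  Properness of the ideal is S being a nonzero
   ring (nzRingType). *)
Definition skew_poly_quotient (D S : nzRingType) (n : nat) (sigmas : 'I_n -> D -> D)
  (phi : {rmorphism D -> S}) (x : 'I_n -> S) : Prop :=
  [/\ commuting_family x,
      forall i, automorphic phi (sigmas i) (x i)
    & forall s : S, exists (N : nat) (r : {ffun 'I_n -> 'I_N} -> D),
        s = \sum_(e : {ffun 'I_n -> 'I_N}) phi (r e) * monom x (fun i => nat_of_ord (e i))].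

(* Main.v *)
Require Import Defs.
From mathcomp Require Import all_boot all_order all_algebra.
From mathcomp Require Import zify.
From Stdlib Require Import Classical.
Set Implicit Arguments. Unset Strict Implicit. Unset Printing Implicit Defensive.
Import GRing.Theory.
Local Open Scope ring_scope.

Section Span.
Variable S : nzRingType.

Definition rclosed (R : S -> Prop) :=
  [/\ R 1, forall a b, R a -> R b -> R (a - b) & forall a b, R a -> R b -> R (a * b)].

Variable R : S -> Prop.
Hypothesis hR : rclosed R.

Lemma rc0 : R 0.
Proof. by case: hR => h1 hB _; rewrite -(subrr 1); apply: hB. Qed.
Lemma rcN a : R a -> R (- a).
Proof. by case: hR => h1 hB _ ha; rewrite -sub0r; apply: hB => //; apply: rc0. Qed.
Lemma rcD a b : R a -> R b -> R (a + b).
Proof. by case: hR => h1 hB _ ha hb; rewrite -(opprK b); apply: hB => //; apply: rcN. Qed.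
Lemma rcM a b : R a -> R b -> R (a * b).
Proof. by case: hR => _ _ h; apply: h. Qed.
Lemma rcB a b : R a -> R b -> R (a - b).
Proof. by case: hR => _ h _; apply: h. Qed.
Lemma rc1 : R 1.
Proof. by case: hR. Qed.

Definition lspan (g : seq S) (s : S) :=
  exists c : nat -> S, (forall j, R (c j)) /\ s = \sum_(j < size g) c j * g`_j.

Lemma lspan0 g : lspan g 0.
Proof. exists (fun _ => 0); split => [j|]; first exact: rc0.
by rewrite big1 // => j _; rewrite mul0r. Qed.

Lemma lspanD g s t : lspan g s -> lspan g t -> lspan g (s + t).
Proof.
move=> [c [hc ->]] [d [hd ->]]; exists (fun j => c j + d j); split.
  by move=> j; apply: rcD.
by rewrite -big_split /=; apply: eq_bigr => j _; rewrite mulrDl.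
Qed.

Lemma lspan_mulL g r s : R r -> lspan g s -> lspan g (r * s).
Proof.
move=> hr [c [hc ->]]; exists (fun j => r * c j); split.
  by move=> j; apply: rcM.
by rewrite mulr_sumr; apply: eq_bigr => j _; rewrite mulrA.
Qed.

Lemma lspanN g s : lspan g s -> lspan g (- s).
Proof. by move=> h; rewrite -mulN1r; apply: lspan_mulL => //; apply: rcN; apply: rc1. Qed.

Lemma lspanB g s t : lspan g s -> lspan g t -> lspan g (s - t).
Proof. by move=> hs ht; apply: lspanD => //; apply: lspanN. Qed.

Lemma lspan_sum g I (r : seq I) (P : pred I) (F : I -> S) :
  (forall i, P i -> lspan g (F i)) -> lspan g (\sum_(i <- r | P i) F i).
Proof.
move=> h; apply: (big_ind (lspan g)) => //; [exact: lspan0 | exact: lspanD].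
Qed.

Lemma lspan_nth g j : (j < size g)%N -> lspan g g`_j.
Proof.
move=> hj; exists (fun l => if l == j then 1 else 0); split.
  by move=> l; case: ifP => _; [apply: rc1 | apply: rc0].
rewrite (bigD1 (Ordinal hj)) //= eqxx mul1r big1 ?addr0 // => l hl.
suff -> : (l : nat) == j = false by rewrite mul0r.
by apply/negbTE; apply: contra hl => /eqP e; apply/eqP/val_inj.
Qed.

Lemma lspan_mem g v : v \in g -> lspan g v.
Proof. by move=> hv; rewrite -(nth_index 0 hv); apply: lspan_nth; rewrite index_mem. Qed.

Lemma lspan_trans g1 g2 s :
  (forall j, (j < size g1)%N -> lspan g2 g1`_j) -> lspan g1 s -> lspan g2 s.
Proof.
move=> h [c [hc ->]]; apply: lspan_sum => j _; apply: lspan_mulL => //.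
exact: h.
Qed.

End Span.

Lemma lspan_tower (S : nzRingType) (R1 R2 : S -> Prop) (g1 g2 : seq S) s :
  rclosed R2 -> (forall r, R1 r -> lspan R2 g2 r) -> lspan R1 g1 s ->
  lspan R2 [seq u * w | u <- g2, w <- g1] s.
Proof.
move=> h2 h12 [c [hc ->]]; apply: lspan_sum => // j _.
have [d [hd ->]] := h12 _ (hc j).
rewrite mulr_suml; apply: lspan_sum => // l _; rewrite -mulrA.
apply: lspan_mulL => //; apply: lspan_mem => //.
by apply: allpairs_f; apply: mem_nth.
Qed.

Lemma gen_rclosed (D S : nzRingType) (phi : D -> S) m (a : 'I_m -> S) :
  rclosed (in_gen_subring phi a).
Proof.
split.
- by move=> P h1 hB hM hphi ha.
- by move=> x y hx hy P h1 hB hM hphi ha; apply: (hB); [exact: (hx P h1 hB hM hphi ha) | exact: (hy P h1 hB hM hphi ha)].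
- by move=> x y hx hy P h1 hB hM hphi ha; apply: (hM); [exact: (hx P h1 hB hM hphi ha) | exact: (hy P h1 hB hM hphi ha)].
Qed.

Lemma gen_phi (D S : nzRingType) (phi : D -> S) m (a : 'I_m -> S) d :
  in_gen_subring phi a (phi d).
Proof. by move=> P h1 hB hM hphi ha. Qed.

Lemma gen_a (D S : nzRingType) (phi : D -> S) m (a : 'I_m -> S) i :
  in_gen_subring phi a (a i).
Proof. by move=> P h1 hB hM hphi ha. Qed.

Lemma uniq_dec (M A A' b b' : nat) : (A < M)%N -> (A' < M)%N ->
  (A + M * b = A' + M * b')%N -> A = A' /\ b = b'.
Proof.
move=> hA hA' e.
have Mpos : (0 < M)%N by case: M hA {hA' e}.
have e1 : ((b * M + A) %/ M = (b' * M + A') %/ M)%N by rewrite mulnC addnC e mulnC addnC.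
rewrite !divnMDl // !divn_small // !addn0 in e1.
by subst b'; split => //; move/eqP: e; rewrite eqn_add2r => /eqP.
Qed.

Lemma digits_bound (N : nat) k (f : 'I_k -> nat) : (forall i, f i < N)%N ->
  (\sum_(i < k) N ^ i * f i < N ^ k)%N.
Proof.
elim: k f => [|k IH] f hf; first by rewrite big_ord0 expn0.
rewrite big_ord_recr /= expnSr.
have h1 := IH (fun i => f (widen_ord (leqnSn k) i)) (fun i => hf _).
have h2 := hf ord_max.
set s := (\sum_(i < k) _)%N in h1 *. set M := (N ^ k)%N in h1 *. set a := f ord_max in h2 *.
nia.
Qed.

Lemma digits_inj (N : nat) k (f f' : 'I_k -> nat) : (forall i, f i < N)%N -> (forall i, f' i < N)%N ->
  (\sum_(i < k) N ^ i * f i = \sum_(i < k) N ^ i * f' i)%N -> f =1 f'.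
Proof.
elim: k f f' => [|k IH] f f' hf hf' e i; first by case: i.
move: e; rewrite !big_ord_recr /=.
have b1 := digits_bound (fun i => hf (widen_ord (leqnSn k) i)).
have b2 := digits_bound (fun i => hf' (widen_ord (leqnSn k) i)).
move=> /(uniq_dec b1 b2) [e1 e2].
have hw := IH _ _ (fun i => hf (widen_ord (leqnSn k) i)) (fun i => hf' (widen_ord (leqnSn k) i)) e1.
case: (ltnP i k) => hi.
  have -> : i = widen_ord (leqnSn k) (Ordinal hi) by apply: val_inj.
  exact: hw.
have -> : i = ord_max by apply: val_inj => /=; move: (ltn_ord i); lia.
exact: e2.
Qed.

Section Main.
Variable D : unitRingType.
Hypothesis hD : division_ring D.
Variable sigma : {rmorphism D -> D}.
Hypothesis hF : center_fixed_infinite sigma.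
Variable S : nzRingType.
Variable phi : {rmorphism D -> S}.

Definition Fel (c : D) := (forall r, c * r = r * c) /\ sigma c = c.

Lemma phi_inj d : phi d = 0 -> d = 0.
Proof.
move=> h; apply/eqP; apply/negP => /negP hd.
have u := hD hd.
have : phi (d^-1 * d) = 0 by rewrite rmorphM h mulr0.
by rewrite mulVr // rmorph1 => /eqP; rewrite oner_eq0.
Qed.

Lemma F_list m : exists s : seq D, [/\ size s = m, uniq s & forall c, c \in s -> Fel c].
Proof.
elim: m => [|m [s [hs us Fs]]]; first by exists [::].
have [c [hc1 hc2] hcs] := hF s.
exists (c :: s); split => //=; first by rewrite hs.
  by rewrite hcs.
move=> c'; rewrite in_cons => /orP [/eqP -> | /Fs //]; by split.
Qed.

Lemma uniq_roots_F (s : seq D) : uniq s -> (forall c, c \in s -> Fel c) -> uniq_roots s.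
Proof.
elim: s => [|a s IH] //= /andP [ha us] Fs; apply/andP; split; last first.
  by apply: IH => // c hc; apply: Fs; rewrite in_cons hc orbT.
apply/allP => b hb; rewrite /diff_roots; apply/andP; split.
  have [h _] := Fs a (mem_head _ _); by rewrite h.
apply: hD; rewrite subr_eq0; apply/eqP => e; move: ha; by rewrite -e hb.
Qed.

Lemma nonroot (P : {poly D}) : P != 0 -> exists z, Fel z /\ P.[z] != 0.
Proof.
move=> hP; have [s [hs us Fs]] := F_list (size P).
case: (boolP (all (root P) s)) => h.
  have := max_ring_poly_roots hP h (uniq_roots_F us Fs); by rewrite hs ltnn.
case/allPn: h => z hz hr; exists z; split; [exact: Fs | exact: hr].
Qed.

Lemma indep0 (x : 'I_0 -> S) : alg_indep phi x.
Proof.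
move=> N r hsum e; apply: phi_inj; move: hsum.
rewrite (bigD1 e) //= big1 ?addr0.
  by rewrite /monom big_ord0 mulr1.
move=> e' he'; suff : e' == e by rewrite (negbTE he').
by apply/eqP/ffunP => -[].
Qed.

Lemma Gen_monom m (a : 'I_m -> S) (e : 'I_m -> nat) : in_gen_subring phi a (monom a e).
Proof.
have hR := gen_rclosed phi a.
apply: (big_ind (in_gen_subring phi a)); [exact: (rc1 hR) | exact: (rcM hR) | move=> i _].
elim: (e i) => [|l IH]; first by rewrite expr0; apply: (rc1 hR).
by rewrite exprS; apply: (rcM hR) => //; apply: gen_a.
Qed.

Lemma Gen_span n (x : 'I_n -> S) N (r : {ffun 'I_n -> 'I_N} -> D) :
  in_gen_subring phi x (\sum_(e : {ffun 'I_n -> 'I_N}) phi (r e) * monom x (fun i => nat_of_ord (e i))).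
Proof.
have hR := gen_rclosed phi x.
apply: (big_ind (in_gen_subring phi x)); [exact: (rc0 hR) | exact: (rcD hR) | move=> e _].
by apply: (rcM hR); [apply: gen_phi | apply: Gen_monom].
Qed.

End Main.

Section Reduce.
Variable D : unitRingType.
Hypothesis hD : division_ring D.
Variable sigma : {rmorphism D -> D}.
Variable S : nzRingType.
Variable phi : {rmorphism D -> S}.
Variable k : nat.
Variable x : 'I_k.+1 -> S.
Hypothesis hcomm : commuting_family x.
Hypothesis haut : forall i, automorphic phi sigma (x i).
Variable N : nat.
Variable z : D.
Hypothesis hz : Fel sigma z.

Definition cc (i : 'I_k.+1) : D := if (i < k)%N then z ^+ (N ^ i) else 1.
Definition xn := x ord_max.
Definition y' (i : 'I_k.+1) : S := x i - phi (cc i) * xn.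
Definition yy (j : 'I_k) : S := y' (widen_ord (leqnSn k) j).
Definition Gy := in_gen_subring phi yy.
Definition LL t := lspan Gy (mkseq (fun j => xn ^+ j) t).

Lemma hGy : rclosed Gy.
Proof. exact: gen_rclosed. Qed.

Lemma Fel_cc i : Fel sigma (cc i).
Proof.
rewrite /cc; case: ifP => _; last by split => [r|]; rewrite ?mul1r ?mulr1 ?rmorph1.
case: hz => h1 h2; split.
  move=> r; apply/commr_sym; apply: commrX; exact/commr_sym/h1.
by rewrite rmorphXn h2.
Qed.

Lemma comm_phi_x (g : D) i : sigma g = g -> GRing.comm (phi g) (x i).
Proof. by move=> hg; rewrite /GRing.comm haut hg. Qed.

Lemma comm_phi_phi (g h : D) : Fel sigma g -> GRing.comm (phi h) (phi g).
Proof. by case=> hg _; rewrite /GRing.comm -!rmorphM hg. Qed.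

Lemma Gy_y' i : Gy (y' i).
Proof.
case: (ltnP i k) => hi.
  have -> : i = widen_ord (leqnSn k) (Ordinal hi) by apply: val_inj.
  exact: gen_a.
have -> : i = ord_max by apply: val_inj => /=; move: (ltn_ord i); lia.
rewrite /y' /cc /= ltnn rmorph1 mul1r /xn subrr; exact: (rc0 hGy).
Qed.

Lemma x_dec i : x i = y' i + phi (cc i) * xn.
Proof. by rewrite /y' subrK. Qed.

Lemma comm_x_y' i j : GRing.comm (x j) (y' i).
Proof.
rewrite /y'; apply: commrB; first exact: hcomm.
apply: commrM; last exact: hcomm.
apply/commr_sym/comm_phi_x; by case: (Fel_cc i).
Qed.

Lemma comm_phi_y' (g : D) i : Fel sigma g -> GRing.comm (phi g) (y' i).
Proof.
move=> hg; rewrite /y'; apply: commrB; first by apply: comm_phi_x; case: hg.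
apply: commrM; first exact: (comm_phi_phi g (Fel_cc i)).
by apply: comm_phi_x; case: hg.
Qed.

Lemma yy_comm : commuting_family yy.
Proof.
move=> i j; rewrite /yy; set a := widen_ord _ i; set b := widen_ord _ j.
have : GRing.comm (y' a) (y' b).
  rewrite [y' b]/y'; apply: commrB; first exact/commr_sym/comm_x_y'.
  apply: commrM; first exact/commr_sym/comm_phi_y'/Fel_cc.
  exact/commr_sym/comm_x_y'.
by [].
Qed.

Lemma yy_aut i : automorphic phi sigma (yy i).
Proof.
move=> b; rewrite /yy /y' /xn mulrBl mulrBr haut -mulrA haut !mulrA.
congr (_ - _ * _); rewrite -!rmorphM; congr (phi _); case: (Fel_cc (widen_ord (leqnSn k) i)) => h _.
by rewrite h.
Qed.

Lemma xn_past r : Gy r -> exists r', Gy r' /\ xn * r = r' * xn.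
Proof.
move=> hr; apply: (hr (fun r => exists r', Gy r' /\ xn * r = r' * xn)).
- by exists 1; split; [exact: (rc1 hGy) | rewrite mulr1 mul1r].
- move=> a b [a' [ha e1]] [b' [hb e2]]; exists (a' - b'); split; first exact: (rcB hGy).
  by rewrite mulrBr mulrBl e1 e2.
- move=> a b [a' [ha e1]] [b' [hb e2]]; exists (a' * b'); split; first exact: (rcM hGy).
  by rewrite mulrA e1 -mulrA e2 mulrA.
- by move=> d; exists (phi (sigma d)); split; [exact: gen_phi | exact: haut].
- move=> i; exists (yy i); split; first exact: gen_a.
  exact: comm_x_y'.
Qed.

Lemma LL_pow j t : (j < t)%N -> LL t (xn ^+ j).
Proof.
move=> h; have h2 : (j < size (mkseq (fun j => xn ^+ j) t))%N by rewrite size_mkseq.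
have := lspan_nth hGy h2; by rewrite nth_mkseq.
Qed.

Lemma LL_mono t t' s : (t <= t')%N -> LL t s -> LL t' s.
Proof.
move=> h; apply: (lspan_trans hGy) => // j; rewrite size_mkseq => hj.
by rewrite nth_mkseq //; apply: LL_pow; apply: leq_trans h.
Qed.

Lemma LL_xn t s : LL t s -> LL t.+1 (xn * s).
Proof.
move=> [c [hc ->]]; rewrite mulr_sumr; apply: (lspan_sum hGy) => // j _.
have hj : (j < t)%N by have := ltn_ord j; move/leq_trans; apply; rewrite size_mkseq.
have [r' [hr' e]] := xn_past (hc j).
rewrite nth_mkseq // mulrA e -mulrA -exprS.
apply: (lspan_mulL hGy) => //; by apply: LL_pow.
Qed.

Definition cong t (g : D) (u : S) := LL t (u - phi g * xn ^+ t).

Lemma cong_x i t g u : sigma g = g -> cong t g u -> cong t.+1 (cc i * g) (x i * u).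
Proof.
move=> hg hu; set l := u - phi g * xn ^+ t.
have eu : u = l + phi g * xn ^+ t by rewrite /l subrK.
rewrite /cong eu x_dec rmorphM exprS.
have hc : xn * phi g = phi g * xn by exact: (esym (comm_phi_x ord_max hg)).
have -> : (y' i + phi (cc i) * xn) * (l + phi g * xn ^+ t) - phi (cc i) * phi g * (xn * xn ^+ t)
   = y' i * l + y' i * phi g * xn ^+ t + phi (cc i) * (xn * l).
  rewrite mulrDl !mulrDr -!mulrA (mulrA xn (phi g)) hc -mulrA.
  by rewrite !addrA addrK !mulrA.
apply: (lspanD hGy) => //; first apply: (lspanD hGy) => //.
- by apply: (lspan_mulL hGy); [exact: Gy_y' | apply: LL_mono hu].
- apply: (lspan_mulL hGy); first by apply: (rcM hGy); [exact: Gy_y' | exact: gen_phi].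
  exact: LL_pow.
- by apply: (lspan_mulL hGy); [exact: gen_phi | exact: LL_xn].
Qed.

Lemma cong_pow i m t g u : sigma g = g -> cong t g u ->
  cong (m + t) (cc i ^+ m * g) (x i ^+ m * u).
Proof.
move=> hg hu; elim: m => [|m IH]; first by rewrite !expr0 !mul1r.
rewrite addSn !exprS -!mulrA; apply: cong_x => //.
by rewrite rmorphM rmorphXn hg; case: (Fel_cc i) => _ ->.
Qed.

Lemma cong_prod (I : seq 'I_k.+1) (e : 'I_k.+1 -> nat) :
  cong (\sum_(i <- I) e i)%N (\prod_(i <- I) cc i ^+ e i) (\prod_(i <- I) x i ^+ e i).
Proof.
elim: I => [|i I IH].
  by rewrite !big_nil /cong expr0 rmorph1 mulr1 subrr; apply: (lspan0 hGy).
rewrite !big_cons; apply: cong_pow => //.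
rewrite rmorph_prod; apply: eq_bigr => j _.
by rewrite rmorphXn; case: (Fel_cc j) => _ ->.
Qed.


Variable r : {ffun 'I_k.+1 -> 'I_N} -> D.
Hypothesis hsum : \sum_(e : {ffun 'I_k.+1 -> 'I_N}) phi (r e) * monom x (fun i => nat_of_ord (e i)) = 0.

Definition deg (e : {ffun 'I_k.+1 -> 'I_N}) := (\sum_(i < k.+1) e i)%N.
Definition TT := (\max_(e | r e != 0%R) deg e)%N.
Definition gam (e : {ffun 'I_k.+1 -> 'I_N}) := \prod_(i < k.+1) cc i ^+ e i.
Definition uu := \sum_(e | deg e == TT) r e * gam e.

Lemma key : uu != 0 -> LL TT (xn ^+ TT).
Proof.
move=> hu.
have h : LL TT (\sum_(e : {ffun 'I_k.+1 -> 'I_N}) phi (r e) * monom x (fun i => nat_of_ord (e i))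
                - phi uu * xn ^+ TT).
  rewrite /uu rmorph_sum mulr_suml [X in _ - X]big_mkcond /= -sumrB.
  apply: (lspan_sum hGy) => e _.
  case: ifP => hd.
  - rewrite rmorphM -mulrA -mulrBr; apply: (lspan_mulL hGy); first exact: gen_phi.
    move/eqP: hd => <-; exact: cong_prod.
  - rewrite subr0.
    case: (eqVneq (r e) 0) => hr; first by rewrite hr rmorph0 mul0r; exact: (lspan0 hGy _).
    apply: (lspan_mulL hGy); first exact: gen_phi.
    have hlt : (deg e < TT)%N.
      by rewrite ltn_neqAle hd /=; apply: leq_bigmax_cond.
    have hc := cong_prod (index_enum _) (fun i => nat_of_ord (e i)).
    rewrite -(subrK (phi (gam e) * xn ^+ deg e) (monom x _)).
    apply: (lspanD hGy); first exact: LL_mono (ltnW hlt) hc.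
    apply: (lspan_mulL hGy); [exact: gen_phi | exact: LL_pow].
move: h; rewrite hsum sub0r => /(lspanN hGy); rewrite opprK => h.
have := lspan_mulL hGy (@gen_phi _ _ phi _ yy (uu^-1)) h.
by rewrite mulrA -rmorphM mulVr ?rmorph1 ?mul1r //; apply: hD.
Qed.

Lemma LL_le j : uu != 0 -> (j <= TT)%N -> LL TT (xn ^+ j).
Proof.
move=> hu; rewrite leq_eqVlt => /orP [/eqP -> | h]; [exact: key | exact: LL_pow].
Qed.

Lemma Gen_x_LL : uu != 0 -> forall s, in_gen_subring phi x s -> LL TT s.
Proof.
move=> hu s hs.
suff : forall t, LL TT t -> LL TT (s * t).
  by move/(_ 1); rewrite mulr1; apply; rewrite -(expr0 xn); apply: LL_le.
apply: (hs (fun s => forall t, LL TT t -> LL TT (s * t))).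
- by move=> t ht; rewrite mul1r.
- by move=> a b ha hb t ht; rewrite mulrBl; apply: (lspanB hGy); [apply: ha | apply: hb].
- by move=> a b ha hb t ht; rewrite -mulrA; apply: ha; apply: hb.
- by move=> d t ht; apply: (lspan_mulL hGy); [exact: gen_phi | exact: ht].
- move=> i t ht; rewrite x_dec mulrDl -mulrA; apply: (lspanD hGy).
    by apply: (lspan_mulL hGy); [exact: Gy_y' | exact: ht].
  apply: (lspan_mulL hGy); first exact: gen_phi.
  apply: (lspan_trans hGy) (LL_xn ht) => j; rewrite size_mkseq => hj.
  by rewrite nth_mkseq //; apply: LL_le.
Qed.


Definition ww (i : 'I_k.+1) : nat := if (i < k)%N then (N ^ i)%N else 0%N.
Definition EE (e : {ffun 'I_k.+1 -> 'I_N}) := (\sum_(i < k.+1) ww i * e i)%N.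

Lemma gam_E e : gam e = z ^+ EE e.
Proof.
rewrite /gam /EE -prodrXr; apply: eq_bigr => i _; rewrite /cc /ww.
by case: ifP => _; [rewrite -exprM | rewrite expr1n mul0n expr0].
Qed.

Lemma EE_inj e e' : deg e = deg e' -> EE e = EE e' -> e = e'.
Proof.
rewrite /deg /EE !big_ord_recr /= /ww /= ltnn !mul0n !addn0.
have hw : forall (f : {ffun 'I_k.+1 -> 'I_N}),
    (\sum_(i < k) (if (widen_ord (leqnSn k) i < k)%N then N ^ widen_ord (leqnSn k) i else 0) *
        f (widen_ord (leqnSn k) i))%N
    = (\sum_(i < k) N ^ i * f (widen_ord (leqnSn k) i))%N.
  by move=> f; apply: eq_bigr => i _ /=; rewrite ltn_ord.
rewrite !hw => hd he.
have hf := digits_inj (fun i => ltn_ord (e (widen_ord (leqnSn k) i)))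
                      (fun i => ltn_ord (e' (widen_ord (leqnSn k) i))) he.
have hs : (\sum_(i < k) e (widen_ord (leqnSn k) i) = \sum_(i < k) e' (widen_ord (leqnSn k) i))%N.
  by apply: eq_bigr => i _; apply: hf.
rewrite hs in hd; move/eqP: hd; rewrite eqn_add2l => /eqP hl.
apply/ffunP => i; apply: val_inj.
case: (ltnP i k) => hi.
  have -> : i = widen_ord (leqnSn k) (Ordinal hi) by apply: val_inj.
  exact: hf.
have -> : i = ord_max by apply: val_inj => /=; move: (ltn_ord i); lia.
exact: hl.
Qed.

Definition PP : {poly D} := \sum_(e | deg e == TT) r e *: 'X^(EE e).

Lemma PP_eval : PP.[z] = uu.
Proof.
rewrite /PP /uu horner_sum; apply: eq_bigr => e _.
by rewrite hornerZ hornerXn gam_E.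
Qed.

Lemma PP_neq0 e0 : r e0 != 0 -> PP != 0.
Proof.
move=> h0.
have hA : (0 < #|[pred e | r e != 0%R]|)%N by apply/card_gt0P; exists e0.
have [e1 h1 h2] := eq_bigmax_cond deg hA.
have hT : TT = deg e1 by rewrite -h2.
have hc : PP`_(EE e1) = r e1.
  rewrite /PP coef_sum (bigD1 e1) /=; last by rewrite hT.
  rewrite coefZ coefXn eqxx mulr1 big1 ?addr0 // => e /andP [hd hne].
  rewrite coefZ coefXn; case: eqP => hE; last by rewrite mulr0.
  move/eqP: hd; rewrite hT => hd.
  by move: hne; rewrite (EE_inj hd (esym hE)) eqxx.
apply/eqP => hP; move: hc; rewrite hP coef0 => /esym/eqP.
by move: h1; rewrite inE => /negbTE ->.
Qed.

End Reduce.

Section Final.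
Variable D : unitRingType.
Hypothesis hD : division_ring D.
Variable sigma : {rmorphism D -> D}.
Hypothesis hF : center_fixed_infinite sigma.
Variable S : nzRingType.
Variable phi : {rmorphism D -> S}.

Lemma reduce k (x : 'I_k.+1 -> S) : commuting_family x ->
  (forall i, automorphic phi sigma (x i)) -> ~ alg_indep phi x ->
  exists y : 'I_k -> S, [/\ commuting_family y, forall i, automorphic phi sigma (y i) &
    exists g : seq S, forall s, in_gen_subring phi x s -> lspan (in_gen_subring phi y) g s].
Proof.
move=> hc ha hn.
have [N hN] := not_all_ex_not _ _ hn.
have [r hr] := not_all_ex_not _ _ hN.
have [hsum hn2] := imply_to_and _ _ hr.
have [e0 hne] := not_all_ex_not _ _ hn2.
have h0 : r e0 != 0 by apply/eqP.
have [z [hz hPz]] := nonroot hD hF (PP_neq0 h0).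
rewrite PP_eval in hPz.
exists (yy phi x N z); split.
- exact: yy_comm.
- exact: yy_aut.
- exists (mkseq (fun j => xn x ^+ j) (TT r)) => s hs.
  exact: (Gen_x_LL hD hc ha hz hsum hPz hs).
Qed.

Lemma main n : forall x : 'I_n -> S, commuting_family x ->
  (forall i, automorphic phi sigma (x i)) ->
  exists m (a : 'I_m -> S), [/\ commuting_family a, forall i, automorphic phi sigma (a i),
    alg_indep phi a &
    exists g : seq S, forall s, in_gen_subring phi x s -> lspan (in_gen_subring phi a) g s].
Proof.
elim: n => [|k IH] x hc ha.
  exists 0%N, x; split; [by case | by case | exact: (indep0 hD) |].
  exists [:: 1] => s hs; exists (fun _ => s); split => //.
  by rewrite big_ord1 /= mulr1.
case: (classic (alg_indep phi x)) => hi.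
  exists k.+1, x; split => //.
  exists [:: 1] => s hs; exists (fun _ => s); split => //.
  by rewrite big_ord1 /= mulr1.
have [y [hcy hay [g hg]]] := reduce hc ha hi.
have [m [a [hca haa hia [g' hg']]]] := IH y hcy hay.
exists m, a; split => //.
exists [seq u * w | u <- g', w <- g] => s hs.
apply: (lspan_tower (gen_rclosed phi a)) (hg _ hs).
exact: hg'.
Qed.

End Final.

Unset Implicit Arguments.
Theorem theorem3p7 (D : unitRingType) (hD : division_ring D)
  (sigma : {rmorphism D -> D}) (hsigma : ring_aut sigma)
  (hF : center_fixed_infinite sigma) (n : nat) :
  forall (S : nzRingType) (phi : {rmorphism D -> S}) (x : 'I_n -> S),
    skew_poly_quotient (fun _ : 'I_n => (sigma : D -> D)) phi x ->
    aut_normalizable phi.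
Proof.
move=> S phi x [hc ha hspan].
have [m [a [hca haa hia [g hg]]]] := main hD hF hc ha.
exists m, a, (fun _ => sigma); split; first by move=> _.
split; first by [].
do 3 (split; first by []).
exists g => s; have [N [r ->]] := hspan s.
have [c [hcj ->]] := hg _ (Gen_span r).
by exists (fun j => c (nat_of_ord j)).
Qed.
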